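(* Let $C\subseteq\mathbb{F}_q^n$ be a constant weight linear code. Let $C'$ be a subcode of $C$ and $c\in C$ a codeword. Then $c\in C'$ if and only if $\mathrm{Supp}(c)\subseteq\mathrm{Supp}(C')$.
   Context: A subcode is a linear subspace. For a subcode $D$, $\mathrm{Supp}(D)=\{x\in\{1,\dots,n\}: \exists d\in D,\ d_x\neq0\}$, and $\mathrm{Supp}(c)$ is the support of the subcode spanned by $c$. A constant weight code is a linear code all of whose non-zero codewords have the same number of non-zero coordinates. *)

(* Defs.v *)
From HB Require Import structures.
From mathcomp Require Import all_boot all_order all_algebra all_field.
Set Implicit Arguments. Unset Strict Implicit. Unset Printing Implicit Defensive.
Import GRing.Theory.
Local Open Scope ring_scope.

(* Codes of length n over a finite field F (= F_q) are subspaces of 'rV[F]_n. *)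

Definition wt (F : finFieldType) (n : nat) (v : 'rV[F]_n) : nat :=
  #|[set i : 'I_n | v 0 i != 0]|.

Definition supp (F : finFieldType) (n : nat) (D : {vspace 'rV[F]_n}) : {set 'I_n} :=
  [set x : 'I_n | [exists d : 'rV[F]_n, (d \in D) && (d 0 x != 0)]].

Definition suppv (F : finFieldType) (n : nat) (c : 'rV[F]_n) : {set 'I_n} :=
  supp <[c]>%VS.

Definition constant_weight (F : finFieldType) (n : nat) (C : {vspace 'rV[F]_n}) : Prop :=
  forall x y : 'rV[F]_n, x \in C -> y \in C -> x != 0 -> y != 0 -> wt x = wt y.

(* Main.v *)
Require Import Defs.
From HB Require Import structures.
From mathcomp Require Import all_boot all_order all_algebra all_field.
From mathcomp Require Import zify.
Import GRing.Theory.
Lemma arith {s P q R w} : (s*(P*q - P) = (P*q - 1)*w -> s*(R*q-R) = (R*q-1)*w -> R*q < P*q -> 0 < w -> 1 < q -> 0 < R -> False)%N.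
Proof.
move=> h1 h2 h3 h4 h5 h6.
have e1 : (P*q - P = P*(q-1))%N by rewrite mulnBr muln1.
have e2 : (R*q - R = R*(q-1))%N by rewrite mulnBr muln1.
rewrite e1 in h1; rewrite e2 in h2.
have : ((P*q - 1)*w*R = (R*q-1)*w*P)%N.
  by rewrite -h1 -h2 mulnAC -!mulnA [(q-1)*_]mulnC [R*_]mulnC.
rewrite !mulnBl !mul1n => h.
have hPR : (R < P)%N by rewrite ltn_pmul2r in h3; lia.
nia.
Qed.

Local Open Scope ring_scope.

Section S.
Variables (F : finFieldType) (n : nat).
Implicit Types (V : {vspace 'rV[F]_n}).

Definition fib V (i : 'I_n) (a : F) := [set d : 'rV[F]_n | (d \in V) && (d 0%R i == a)].

Lemma fib_card V i a : i \in supp V -> #|fib V i a| = #|fib V i 0|.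
Proof.
rewrite inE => /existsP[e /andP[eV ei]].
set e' := (e 0 i)^-1 *: e.
have e'V : e' \in V by rewrite memvZ.
have e'i : e' 0 i = 1 by rewrite mxE mulVf.
clearbody e'.
have -> : fib V i a = (fun d => d + a *: e') @: fib V i 0.
  apply/setP=> d; apply/idP/imsetP.
    rewrite inE => /andP[dV /eqP di]; exists (d - a *: e'); last by rewrite addrNK.
    by rewrite inE rpredB ?memvZ //= !mxE e'i di mulr1 subrr.
  case=> x; rewrite !inE => /andP[xV /eqP xi] ->.
  by rewrite rpredD ?memvZ //= !mxE xi e'i mulr1 add0r.
by apply: card_imset => x y /addIr.
Qed.

Lemma fib_total V i : i \in supp V -> (#|fib V i (0%R:F)| * #|F| = #|[set d | d \in V]|)%N.
Proof.
move=> iS.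
rewrite -[RHS]sum1_card (partition_big (fun d : 'rV[F]_n => d 0%R i) xpredT) //=.
rewrite mulnC -sum_nat_const.
apply: eq_bigr => a _.
rewrite -(@fib_card V i a iS) -sum1_card; apply: eq_bigl => d.
by rewrite !inE.
Qed.
Definition setV V := [set d : 'rV[F]_n | d \in V].

Lemma sum_wt V : (\sum_(d in setV V) wt d =
   #|supp V| * (#|setV V| - #|setV V| %/ #|F|))%N.
Proof.
have wtE d : wt d = (\sum_i (d 0%R i != 0%R))%N.
  by rewrite /wt cardE -sum1_size big_enum big_mkcond /=; apply: eq_bigr=> j _; rewrite inE; case: ifP.
under eq_bigr do rewrite wtE.
rewrite exchange_big /= -sum_nat_const (bigID (fun i => i \in supp V)) /=.
rewrite [X in (_ + X)%N]big1 ?addn0.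
  apply: eq_bigr => i iS.
  have qpos : (0 < #|F|)%N by apply/card_gt0P; exists 0%R.
  have hZ := fib_total V i iS; rewrite -{2}hZ mulnK //.
  rewrite -(cardID (fun d : 'rV[F]_n => d 0%R i == 0%R) (setV V)).
  rewrite (@eq_card _ _ (fib V i 0%R)); last by move=> d; rewrite !inE.
  rewrite addKn -sum1_card big_mkcond /= [RHS]big_mkcond /=; apply: eq_bigr => d _.
  rewrite !inE.
  by case: (d \in V); rewrite /= ?andbT ?andbF // unfold_in; case: (d 0%R i == 0%R).
move=> i iS; apply: big1 => d dV.
apply/eqP; rewrite eqb0 negbK; apply/eqP; apply: contraNeq iS => di.
rewrite inE; apply/existsP; exists d; rewrite di andbT.
by move: dV; rewrite inE.
Qed.
Lemma sum_cw C V c : constant_weight C -> (V <= C)%VS -> c \in C -> c != 0 ->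
  (\sum_(d in setV V) wt d = (#|setV V| - 1) * wt c)%N.
Proof.
move=> cw VC cC c0.
have z : (0 : 'rV[F]_n) \in setV V by rewrite inE mem0v.
rewrite (bigD1 0 z) /=.
have -> : wt (0 : 'rV[F]_n) = 0%N.
  by apply/eqP; rewrite cards_eq0; apply/eqP/setP => j; rewrite !inE mxE eqxx.
rewrite add0n (cardD1 0) z add1n subSS subn0 -sum_nat_const.
apply: eq_big => [d|d].
rewrite [RHS]inE andbC.
by [].
move=> /andP[dV d0].
apply: cw => //.
have dV' : d \in setV V := dV. by apply: (subvP VC); move: dV'; rewrite inE.
Qed.

Lemma nz_supp (c : 'rV[F]_n) : c != 0 -> exists i, c 0 i != 0.
Proof.
move=> c0; apply/existsP; apply: contraR c0 => /existsPn h.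
by apply/eqP/rowP => j; rewrite mxE; move: (h j); rewrite negbK => /eqP.
Qed.
End S.
Arguments setV {F n}. Arguments fib {F n}.



Theorem lemma2 (F : finFieldType) (n : nat) (C C' : {vspace 'rV[F]_n}) (c : 'rV[F]_n) :
  constant_weight C -> (C' <= C)%VS -> c \in C ->
  (c \in C') <-> (suppv c \subset supp C').
Proof.
move=> cw C'C cC; split.
  move=> cC'; apply/subsetP => i; rewrite !inE => /existsP[d /andP[dc di]].
  by apply/existsP; exists d; rewrite di andbT (subvP cC').
move=> sub.
have [->|c0] := eqVneq c 0; first by rewrite mem0v.
apply: contraTT isT => ncC'.
exfalso.
set D := (C' + <[c]>)%VS.
have DC : (D <= C)%VS by rewrite subv_add C'C.
have suppD : supp D = supp C'.
  apply/setP => i; apply/idP/idP; rewrite !inE => /existsP[d /andP[dD di]].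
    move: dD di => /memv_addP[u uC' [v vc ->]].
    rewrite mxE; have [ui|ui] := eqVneq (u 0%R i) 0.
      rewrite ui add0r => vi.
      have : i \in suppv c by rewrite inE; apply/existsP; exists v; rewrite vi vc.
      by move/(subsetP sub); rewrite inE.
    by move=> _; apply/existsP; exists u; rewrite uC' ui.
  by apply/existsP; exists d; rewrite di andbT (subvP (addvSl C' <[c]>%VS)).
have [i ci] := @nz_supp F n c c0.
have iS : i \in supp C'.
  apply: (subsetP sub); rewrite inE; apply/existsP; exists c; rewrite ci andbT memv_line //.
have iD : i \in supp D by rewrite suppD.
have q1 : (1 < #|F|)%N by apply: finNzRing_gt1.
have hD := @fib_total F n D i iD.
have hC := @fib_total F n C' i iS.
have sD := @sum_wt F n D; have sC := @sum_wt F n C'.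
rewrite (@sum_cw F n C D c cw DC cC c0) suppD in sD.
rewrite (@sum_cw F n C C' c cw C'C cC c0) in sC.
rewrite -hD mulnK ?(ltnW q1) // in sD.
rewrite -hC mulnK ?(ltnW q1) // in sC.
have w0 : (0 < wt c)%N by rewrite card_gt0; apply/set0Pn; exists i; rewrite inE.
have lt : (#|setV C'| < #|setV D|)%N.
  apply: proper_card; apply/properP; split.
    by apply/subsetP => d; rewrite !inE => /(subvP (addvSl C' <[c]>%VS)).
  by exists c; rewrite !inE // (subvP (addvSr C' <[c]>%VS)) // memv_line.
have R0 : (0 < #|fib C' i 0%R|)%N.
  by rewrite card_gt0; apply/set0Pn; exists 0; rewrite !inE mem0v mxE eqxx.
rewrite -hD -hC in lt.
exact: (arith (esym sD) (esym sC) lt w0 q1 R0).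
Qed.
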